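(* Let $p>1$ and let $\{X_\alpha\}$ be an arbitrary family of positive real-valued random variables. Then there exists a random variable $Y$ with $\mathbb{E}|Y|^p<\infty$ such that $X_\alpha\le_{\mathrm{icx}}Y$ for all $\alpha$ if and only if there exists a random variable $Z$ with $\mathbb{E}|Z|^p<\infty$ such that $X_\alpha\le_{\mathrm{st}}Z$ for all $\alpha$.
   Context: ''Positive'' means nonnegative; the random variables need not be on a common probability space. $X_1\le_{\mathrm{st}}X_2$ means $\mathbb{P}(X_1>t)\le\mathbb{P}(X_2>t)$ for all $t\in\mathbb{R}$ (equivalently $\mathbb{E}\phi(X_1)\le\mathbb{E}\phi(X_2)$ for all increasing measurable $\phi\ge 0$). For positive $X_1,X_2$, $X_1\le_{\mathrm{icx}}X_2$ means $\mathbb{E}\phi(X_1)\le\mathbb{E}\phi(X_2)$ for all increasing convex $\phi:\mathbb{R}_+\to\mathbb{R}_+$, equivalently $\mathbb{E}(X_1-t)_+\le\mathbb{E}(X_2-t)_+$ for all $t\ge0$. *)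

(* Defs.v *)
From HB Require Import structures.
From mathcomp Require Import all_boot all_order all_algebra.
From mathcomp Require Import all_classical all_reals all_analysis.
Set Implicit Arguments. Unset Strict Implicit. Unset Printing Implicit Defensive.
Import Order.TTheory GRing.Theory Num.Theory.
Local Open Scope classical_set_scope.
Local Open Scope ring_scope.

(* phi : R -> R is increasing and convex on R_+ and maps R_+ into R_+
   (only its values on R_+ matter, since it is applied to nonnegative r.v.s) *)
Definition incr_convex_nonneg (R : realType) (phi : R -> R) : Prop :=
  [/\ (forall x, 0 <= x -> 0 <= phi x),
      (forall x y, 0 <= x -> x <= y -> phi x <= phi y) &
      (forall x y l, 0 <= x -> 0 <= y -> 0 <= l -> l <= 1 ->
         phi (l * x + (1 - l) * y) <= l * phi x + (1 - l) * phi y)].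

Definition st_le (R : realType) d1 d2 (T1 : measurableType d1)
  (T2 : measurableType d2) (P1 : probability T1 R) (P2 : probability T2 R)
  (X1 : T1 -> R) (X2 : T2 -> R) : Prop :=
  forall t : R, (P1 [set w | (t < X1 w)%R] <= P2 [set w | (t < X2 w)%R])%E.

Definition icx_le (R : realType) d1 d2 (T1 : measurableType d1)
  (T2 : measurableType d2) (P1 : probability T1 R) (P2 : probability T2 R)
  (X1 : T1 -> R) (X2 : T2 -> R) : Prop :=
  forall phi : R -> R, incr_convex_nonneg phi ->
    (\int[P1]_w (phi (X1 w))%:E <= \int[P2]_w (phi (X2 w))%:E)%E.

Definition finite_pth_moment (R : realType) d (T : measurableType d)
  (P : probability T R) (p : R) (Y : T -> R) : Prop :=
  (\int[P]_w ((`|Y w| `^ p)%:E) < +oo)%E.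

(* Main.v *)
Require Import Defs.
From HB Require Import structures.
From mathcomp Require Import all_boot all_order all_algebra.
From mathcomp Require Import all_classical all_reals all_analysis.
From mathcomp Require Import measurable_realfun.
From mathcomp Require Import ring lra.
Import Order.TTheory GRing.Theory Num.Theory.
Local Open Scope classical_set_scope.
Local Open Scope ring_scope.

Module Helpers.
Set Implicit Arguments. Unset Strict Implicit.

Lemma powD_le (R : realType) (p a b : R) : 0 <= p -> 0 <= a -> 0 <= b ->
  (a + b) `^ p <= 2 `^ p * (a `^ p + b `^ p).
Proof.
move=> p0 a0 b0.
have [ab|ba] := leP a b.
- have h : a + b <= 2 * b by lra.
  apply: (le_trans (ge0_ler_powR p0 _ _ h)); rewrite ?nnegrE; try lra.
  rewrite powRM; try lra.
  apply: ler_wpM2l; first exact: powR_ge0.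
  by rewrite lerDr powR_ge0.
- have h : a + b <= 2 * a by lra.
  apply: (le_trans (ge0_ler_powR p0 _ _ h)); rewrite ?nnegrE; try lra.
  rewrite powRM; try lra.
  apply: ler_wpM2l; first exact: powR_ge0.
  by rewrite lerDl powR_ge0.
Qed.


Lemma mpre (R : realType) d (T : measurableType d) (f : T -> R)
  (mf : measurable_fun setT f) (r : R) : measurable [set w | r < f w].
Proof.
rewrite (_ : [set w | r < f w] = f @^-1` `]r, +oo[); last first.
  by apply/seteqP; split=> w /=; rewrite in_itv /= andbT.
by have := mf measurableT _ (measurable_itv `]r, +oo[); rewrite setTI.
Qed.

Lemma upset_le (R : realType) d1 d2 (T1 : measurableType d1)
  (T2 : measurableType d2) (P1 : probability T1 R) (P2 : probability T2 R)
  (X : T1 -> R) (Z Y : T2 -> R) (mX : measurable_fun setT X)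
  (mZ : measurable_fun setT Z) (mY : measurable_fun setT Y)
  (hYZ : forall w, Z w + 1 <= Y w) (hst : st_le P1 P2 X Z)
  (psi : R -> R) (mpsi : measurable_fun setT psi)
  (hpsi : nondecreasing_fun psi) (r : R) :
  (P1 [set w | (r < psi (X w))%R] <= P2 [set w | (r < psi (Y w))%R])%E.
Proof.
have mpX : measurable_fun setT (psi \o X) := measurableT_comp mpsi mX.
have mpY : measurable_fun setT (psi \o Y) := measurableT_comp mpsi mY.
case: (pselect (forall x, r < psi x)) => [hall|].
  rewrite (_ : [set w | r < psi (Y w)] = setT) ?probability_setT.
    by have := probability_le1 P1 (mpre mpX r).
  by apply/seteqP; split => // w _; exact: hall.
move=> /existsNP [x0 /negP]; rewrite -leNgt => hx0.
case: (pselect (exists x, r < psi x)) => [[x1 hx1]|hnone]; last first.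
  rewrite (_ : [set w | r < psi (X w)] = set0) ?measure0 ?measure_ge0 //.
  by apply/seteqP; split => // w /= hw; apply: hnone; exists (X w).
set U := [set x | r < psi x].
have hlb : has_lbound U.
  exists x0 => y /= hy; rewrite leNgt; apply/negP => yx0.
  move: hy; rewrite /U /= => hy; have := hpsi _ _ (ltW yx0); lra.
have aU : forall y, U y -> inf U <= y := ge_inf hlb.
have Ua : forall y, inf U < y -> U y.
  move=> y /(inf_lt (ex_intro _ x1 hx1)) [z Uz zy].
  by rewrite /U /=; apply: (lt_le_trans Uz); apply: hpsi; exact: ltW.
apply: (@le_trans _ _ (P1 [set w | inf U - 1 < X w])).
  apply: le_measure; rewrite ?inE; [exact: (mpre mpX)|exact: mpre|].
  move=> w /= hw; have := aU _ hw; lra.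
apply: (le_trans (hst (inf U - 1))).
apply: le_measure; rewrite ?inE; [exact: mpre|exact: (mpre mpY)|].
move=> w /= hw; apply: Ua; have := hYZ w; lra.
Qed.


Lemma st_to_icx (R : realType) d1 d2 (T1 : measurableType d1)
  (T2 : measurableType d2) (P1 : probability T1 R) (P2 : probability T2 R)
  (X : {RV P1 >-> R}) (Z Y : {RV P2 >-> R})
  (hX0 : forall w, 0 <= X w) (hY0 : forall w, 0 <= Y w)
  (hYZ : forall w, Z w + 1 <= Y w) (hst : st_le P1 P2 X Z) :
  icx_le P1 P2 X Y.
Proof.
move=> phi [phi0 phimon _].
pose psi x := phi (Num.max x 0).
have psind : nondecreasing_fun psi.
  move=> x y xy; apply: phimon; first by rewrite le_max lexx orbT.
  exact: le_max2 xy (lexx 0).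
have psi0 : forall x, 0 <= psi x.
  by move=> x; apply: phi0; rewrite le_max lexx orbT.
have mpsi := @measurable_realfun.nondecreasing_measurable R setT psi measurableT psind.
have mXX : measurable_fun setT (psi \o X) := measurableT_comp mpsi (measurable_funPT X).
have mYY : measurable_fun setT (psi \o Y) := measurableT_comp mpsi (measurable_funPT Y).
pose XX : {RV P1 >-> R} := mfun_Sub (mem_set mXX : (psi \o X) \in mfun).
pose YY : {RV P2 >-> R} := mfun_Sub (mem_set mYY : (psi \o Y) \in mfun).
have eX : (\int[P1]_w (phi (X w))%:E = 'E_P1[XX])%E.
  rewrite expectation_def; apply: eq_integral => w _.
  by rewrite /XX mfun_valP /= /psi (max_idPl (hX0 w)).
have eY : (\int[P2]_w (phi (Y w))%:E = 'E_P2[YY])%E.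
  rewrite expectation_def; apply: eq_integral => w _.
  by rewrite /YY mfun_valP /= /psi (max_idPl (hY0 w)).
rewrite eX eY (@ge0_expectation_ccdf _ _ _ _ XX); last first.
  by move=> w; rewrite /XX mfun_valP /=.
rewrite (@ge0_expectation_ccdf _ _ _ _ YY); last first.
  by move=> w; rewrite /YY mfun_valP /=.
apply: ge0_le_integral => //.
- exact: measurable_funTS (ccdf_measurable XX).
- exact: measurable_funTS (ccdf_measurable YY).
move=> r _; rewrite /ccdf /distribution /pushforward /=.
have -> : XX @^-1` `]r, +oo[ = [set w | (r < psi (X w))%R].
  by apply/seteqP; split=> w /=; rewrite in_itv /= andbT.
have -> : YY @^-1` `]r, +oo[ = [set w | (r < psi (Y w))%R].
  by apply/seteqP; split=> w /=; rewrite in_itv /= andbT.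
apply: upset_le => //; exact: measurable_funPT.
Qed.


Lemma mpow (R : realType) d (T : measurableType d) (p : R) (f : T -> R)
  (mf : measurable_fun setT f) :
  measurable_fun setT (fun w => (`|f w| `^ p)%:E).
Proof.
apply/measurable_EFinP.
apply: (measurableT_comp (measurable_powR p)).
exact: (measurableT_comp (@normr_measurable R setT) mf).
Qed.

Lemma moment_le (R : realType) d (T : measurableType d) (P : probability T R)
  (p c : R) (c0 : 0 <= c) (f g : T -> R) (mf : measurable_fun setT f)
  (mg : measurable_fun setT g) (hm : finite_pth_moment P p g)
  (h : forall w, `|f w| `^ p <= c * (`|g w| `^ p + 1)) :
  finite_pth_moment P p f.
Proof.
rewrite /finite_pth_moment.
apply: (@le_lt_trans _ _ (\int[P]_w (c%:E * ((`|g w| `^ p)%:E + (cst 1%:E) w)))%E).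
  apply: ge0_le_integral => //.
  all: try (by move=> w _; rewrite lee_fin powR_ge0).
  - exact: mpow.
  - apply: emeasurable_funM; first exact: measurable_cst.
    exact: (emeasurable_funD (mpow p mg) (measurable_cst _)).
  - by move=> w _; rewrite /= -EFinD -EFinM lee_fin.
rewrite ge0_integralZl //; last 2 first.
- exact: (emeasurable_funD (mpow p mg) (measurable_cst _)).
- by move=> w _; rewrite /= adde_ge0 // lee_fin powR_ge0.
rewrite ge0_integralD //; last 2 first.
  all: try (by move=> w _; rewrite lee_fin powR_ge0).
  all: try exact: mpow.
rewrite integral_cst // mul1e.
apply: lte_mul_pinfty; first by rewrite lee_fin.
  by rewrite ge0_fin_numE ?lte_fin ?ltry // lee_fin.
rewrite lte_add_pinfty //.
exact: (le_lt_trans (probability_le1 P measurableT) (ltry 1)).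
Qed.


Definition hinge (R : realType) (c x : R) := Num.max (x - c) 0.

Lemma hinge_ge (R : realType) (c x : R) : x - c <= hinge c x.
Proof. by rewrite /hinge le_max lexx. Qed.

Lemma hinge_ge0 (R : realType) (c x : R) : 0 <= hinge c x.
Proof. by rewrite /hinge le_max lexx orbT. Qed.

Lemma hinge_mono (R : realType) (c x y : R) : x <= y -> hinge c x <= hinge c y.
Proof. by move=> xy; rewrite /hinge le_max2 // lerB. Qed.

Lemma hinge_icx (R : realType) (c : R) : incr_convex_nonneg (hinge c).
Proof.
split.
- by move=> x _; exact: hinge_ge0.
- by move=> x y _; exact: hinge_mono.
- move=> x y l x0 y0 l0 l1.
  rewrite {1}/hinge ge_max; apply/andP; split.
    have h1 := hinge_ge c x; have h2 := hinge_ge c y.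
    have h3 : l * (x - c) <= l * hinge c x by rewrite ler_wpM2l.
    have h4 : (1 - l) * (y - c) <= (1 - l) * hinge c y by rewrite ler_wpM2l // subr_ge0.
    lra.
  have h1 := hinge_ge0 c x; have h2 := hinge_ge0 c y.
  have h3 : 0 <= l * hinge c x by rewrite mulr_ge0.
  have h4 : 0 <= (1 - l) * hinge c y by rewrite mulr_ge0 // subr_ge0.
  lra.
Qed.

Lemma mhinge (R : realType) (c : R) : measurable_fun setT (hinge c).
Proof.
have -> : hinge c = ((@id R) \- cst c) \max (cst 0) by apply/funext.
apply: measurable_maxr; last exact: measurable_cst.
apply: measurable_funB; [exact: measurable_id|exact: measurable_cst].
Qed.

Lemma markov_hinge (R : realType) d1 d2 (T1 : measurableType d1)
  (T2 : measurableType d2) (P1 : probability T1 R) (P2 : probability T2 R)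
  (X : {RV P1 >-> R}) (Y : T2 -> R) (hX0 : forall w, 0 <= X w)
  (hicx : icx_le P1 P2 X Y) (c : R) (c0 : 0 < c) :
  (P1 [set w | (2 * c < X w)%R] <=
   (c^-1)%:E * \int[P2]_w (hinge c (Y w))%:E)%E.
Proof.
have hm := @markov _ _ _ P1 X (hinge c) (2 * c) (ltac:(lra)) (mhinge c)
  (fun r _ => hinge_ge0 c r) (fun x y _ _ xy => hinge_mono c xy).
have hc : hinge c (2 * c) = c.
  by rewrite /hinge (_ : 2 * c - c = c) ?(max_idPl (ltW c0)) //; lra.
rewrite hc in hm.
have hE : ('E_P1[(hinge c \o Num.norm) \o X] = \int[P1]_w (hinge c (X w))%:E)%E.
  rewrite unlock; apply: eq_integral => w _ /=.
  by rewrite ger0_norm.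
rewrite hE in hm.
have hle : (c%:E * P1 [set w | (2 * c < X w)%R] <= \int[P2]_w (hinge c (Y w))%:E)%E.
  apply: le_trans (hicx _ (hinge_icx c)).
  apply: le_trans hm.
  apply: lee_wpmul2l; first by rewrite lee_fin ltW.
  apply: le_measure; rewrite ?inE.
  - exact: (mpre (measurable_funPT X)).
  - rewrite (_ : [set _ | _] = X @^-1` `[2 * c, +oo[); first exact: measurable_funPTI.
    apply/seteqP; split => w /=; rewrite in_itv /= andbT lee_fin ger0_norm //.
  - by move=> w /= h; rewrite lee_fin ger0_norm // ltW.
have hc0 : (0 <= c^-1%:E)%E by rewrite lee_fin invr_ge0 ltW.
have := lee_wpmul2l hc0 hle.
by rewrite muleA -EFinM mulVf ?gt_eqF // mul1e.
Qed.


Section unif.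
Variable R : realType.
Local Notation U := (uniform_prob (@ltr01 R)).

Lemma mlt (e : R) : measurable [set u : R | u < e].
Proof.
rewrite (_ : [set u : R | u < e] = `]-oo, e[%classic); first exact: measurable_itv.
by apply/seteqP; split => u /=; rewrite in_itv.
Qed.

Lemma Uval (A : set R) (mA : measurable A) :
  U A = lebesgue_measure (A `&` `[0, 1]).
Proof.
rewrite /uniform_prob integral_uniform_pdf.
transitivity (\int[lebesgue_measure]_(x in A `&` (`[0%R, 1%R] : set R)) (cst 1%:E) x)%E.
  apply: eq_integral => x; rewrite inE => -[_ /=]; rewrite in_itv /= => h.
  by rewrite /uniform_pdf h subr0 invr1.
by rewrite integral_cst ?mul1e //; apply: measurableI => //; exact: measurable_itv.
Qed.

Lemma U_lt_ub (e : R) : 0 <= e -> (U [set u | (u < e)%R] <= e%:E)%E.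
Proof.
move=> e0; rewrite Uval; last exact: mlt.
apply: (@le_trans _ _ (lebesgue_measure (`[0, e[%classic : set R))).
  apply: le_measure; rewrite ?inE.
  - by apply: measurableI; [exact: mlt|exact: measurable_itv].
  - exact: measurable_itv.
  - by move=> u [/= ue]; rewrite !in_itv /= => /andP[u0 _]; rewrite u0.
rewrite lebesgue_measure_itv /= lte_fin.
by case: ifP => _; rewrite ?sube0 ?lee_fin.
Qed.

Lemma U_lt_lb (e : R) : 0 <= e -> e <= 1 -> (e%:E <= U [set u | (u < e)%R])%E.
Proof.
move=> e0 e1; rewrite Uval; last exact: mlt.
apply: (@le_trans _ _ (lebesgue_measure (`[0, e[%classic : set R))).
  rewrite lebesgue_measure_itv /= lte_fin.
  case: ifP => h; rewrite ?sube0 //.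
  by have -> : e = 0 by apply/eqP; rewrite eq_le e0 andbT leNgt h.
apply: le_measure; rewrite ?inE.
- exact: measurable_itv.
- by apply: measurableI; [exact: mlt|exact: measurable_itv].
- move=> u /=; rewrite !in_itv /= => /andP[u0 ue]; split => //.
  by rewrite u0 /=; apply: ltW; exact: lt_le_trans ue e1.
Qed.

Lemma mltE (e : \bar R) : measurable [set u : R | (u%:E < e)%E].
Proof.
case: e => [r| |].
- by rewrite (_ : [set _ | _] = [set u | u < r]); [exact: mlt|apply/seteqP; split=> u /=; rewrite lte_fin].
- by rewrite (_ : [set _ | _] = setT); [exact: measurableT|apply/seteqP; split=> u //= _; rewrite ltry].
- by rewrite (_ : [set _ | _] = set0); [exact: measurable0|apply/seteqP; split=> u //=; rewrite ltNye].
Qed.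

Lemma UE_ub (e : \bar R) : (0 <= e)%E -> (U [set u | (u%:E < e)%E] <= e)%E.
Proof.
case: e => [r| |] //; last by move=> _; rewrite leey.
rewrite lee_fin => r0.
rewrite (_ : [set _ | _] = [set u | u < r]); first exact: U_lt_ub.
by apply/seteqP; split=> u /=; rewrite lte_fin.
Qed.

Lemma UE_lb (e x : \bar R) : (0 <= e)%E -> (x <= 1)%E -> (x <= e)%E ->
  (x <= U [set u | (u%:E < e)%E])%E.
Proof.
case: e => [r| |] //; last first.
  move=> _ x1 _; rewrite (_ : [set _ | _] = setT) ?probability_setT //.
  by apply/seteqP; split=> u //= _; rewrite ltry.
rewrite lee_fin => r0 x1 xr.
rewrite (_ : [set _ | _] = [set u | u < r]); last first.
  by apply/seteqP; split=> u /=; rewrite lte_fin.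
pose s := Num.min r 1.
have s0 : 0 <= s by rewrite /s le_min r0 ler01.
have s1 : s <= 1 by rewrite /s ge_min lexx orbT.
have xs : (x <= s%:E)%E.
  rewrite /s; case: (leP r 1) => h; first by [].
  exact: x1.
apply: (le_trans xs); apply: (le_trans (U_lt_lb s0 s1)).
apply: le_measure; rewrite ?inE; [exact: mlt|exact: mlt|].
by move=> u /= us; apply: (lt_le_trans us); rewrite /s ge_min lexx.
Qed.

End unif.


Lemma powR2_gt1 (R : realType) (q : R) : 0 < q -> 1 < 2 `^ q.
Proof.
move=> q0; have := @gt0_ltr_powR R q q0 1 2; rewrite powR1.
by apply; rewrite ?nnegrE //; lra.
Qed.

Lemma geo (R : realType) (q y : R) (q0 : 0 < q) (y0 : 0 <= y) n :
  \sum_(k < n) (if 2^+k < y then (2^+k) `^ q else 0) <=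
  (Num.min (2^+n) (2 * y)) `^ q / (2 `^ q - 1).
Proof.
have r1 := powR2_gt1 q0.
have ir0 : 0 <= (2 `^ q - 1)^-1 by rewrite invr_ge0; lra.
elim: n => [|n IH].
  by rewrite big_ord0 mulr_ge0 // powR_ge0.
rewrite big_ord_recr /=.
have e2 : (2:R)^+n.+1 = 2 * 2^+n by rewrite exprS.
have p0 : (0:R) <= 2^+n by rewrite exprn_ge0.
case: ifP => h.
- have m1 : Num.min (2^+n) (2 * y) = 2^+n.
    by apply/min_idPl; lra.
  have m2 : Num.min (2^+n.+1) (2 * y) = 2^+n.+1.
    by apply/min_idPl; lra.
  rewrite m1 in IH; rewrite m2 e2 powRM //.
  set a := (2^+n) `^ q in IH *.
  set r := 2 `^ q in IH r1 ir0 *.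
  have e : r * a / (r - 1) = a / (r - 1) + a.
    by field; lra.
  rewrite e; lra.
- rewrite addr0; apply: (le_trans IH); apply: ler_wpM2r => //.
  apply: ge0_ler_powR; rewrite ?nnegrE ?le_min ?p0 /=.
  + lra.
  + lra.
  + by rewrite exprn_ge0 /=; lra.
  + by rewrite !ge_min lexx orbT andbT e2; apply/orP; left; lra.
Qed.

Lemma hinge_series (R : realType) (q y : R) (q0 : 0 < q) (y0 : 0 <= y) n :
  \sum_(k < n) (2^+k) `^ q * hinge (2^+k) y <= y * ((2 * y) `^ q / (2 `^ q - 1)).
Proof.
have r1 := powR2_gt1 q0.
apply: (@le_trans _ _ (y * \sum_(k < n) (if 2^+k < y then (2^+k) `^ q else 0))).
  rewrite mulr_sumr; apply: ler_sum => k _.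
  have p0 : (0:R) <= 2^+k by rewrite exprn_ge0.
  case: ifP => h.
  - rewrite /hinge (max_idPl _); last lra.
    rewrite mulrC; apply: ler_wpM2r; [exact: powR_ge0|lra].
  - rewrite /hinge (max_idPr _); last by move/negbT: h; rewrite -leNgt; lra.
    by rewrite mulr0 mulr0.
apply: ler_wpM2l => //; apply: (le_trans (geo q0 y0 n)).
apply: ler_wpM2r; first by rewrite invr_ge0; lra.
apply: ge0_ler_powR; rewrite ?nnegrE ?le_min ?ge_min ?lexx ?orbT //; try lra.
by rewrite exprn_ge0 /=; lra.
Qed.


Section zcons.
Variables (R : realType) (p : R) (hp : 1 < p) (dY : measure_display)
  (TY : measurableType dY) (PY : probability TY R) (Y : {RV PY >-> R})
  (hY0 : forall w, 0 <= Y w) (hmY : finite_pth_moment PY p Y).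

Local Notation U := (uniform_prob (@ltr01 R)).

Definition mm k : \bar R := (\int[PY]_w (hinge (2^+k) (Y w))%:E)%E.
Definition gg k : \bar R := (((2^+k)^-1)%:E * mm k)%E.
Definition cc k : R := (2^+k.+2) `^ p.
Definition AA k : set R := [set u | (u%:E < gg k)%E].
Definition ww u : \bar R := (\sum_(k <oo) ((cc k)%:E * (\1_(AA k) u)%:E))%E.

Lemma mhY k : measurable_fun setT (fun w => (hinge (2^+k) (Y w))%:E).
Proof. exact/measurable_EFinP/(measurableT_comp (mhinge _) (measurable_funPT Y)). Qed.

Lemma mm_ge0 k : (0 <= mm k)%E.
Proof. by apply: integral_ge0 => w _; rewrite lee_fin hinge_ge0. Qed.

Lemma gg_ge0 k : (0 <= gg k)%E.
Proof. by rewrite mule_ge0 ?mm_ge0 // lee_fin invr_ge0 exprn_ge0. Qed.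

Lemma cc_ge0 k : 0 <= cc k.
Proof. exact: powR_ge0. Qed.

Lemma term_ge0 k u : (0 <= (cc k)%:E * (\1_(AA k) u)%:E)%E.
Proof. by rewrite -EFinM lee_fin mulr_ge0 ?cc_ge0. Qed.

Lemma mterm k : measurable_fun setT (fun u : R => ((cc k)%:E * (\1_(AA k) u)%:E)%E).
Proof.
rewrite (_ : (fun u => _) = EFin \o (fun u => cc k * \1_(AA k) u)); last first.
  by apply/funext => u /=; rewrite EFinM.
apply/measurable_EFinP; apply: measurable_funM; first exact: measurable_cst.
exact: (@measurable_indic _ _ _ setT (AA k) (mltE (gg k))).
Qed.

Lemma mww : measurable_fun setT ww.
Proof.
apply: ge0_emeasurable_sum; [by move=> k u _ _; exact: term_ge0|by move=> k _; exact: mterm].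
Qed.

Lemma ww_ge0 u : (0 <= ww u)%E.
Proof. by apply: nneseries_ge0 => k _ _; exact: term_ge0. Qed.


Lemma int_ww : (\int[U]_u ww u = \sum_(k <oo) (cc k)%:E * U (AA k))%E.
Proof.
rewrite /ww integral_nneseries //; last 2 first.
- by move=> k; exact: mterm.
- by move=> k u _; exact: term_ge0.
apply: eq_eseriesr => k _.
have mI : measurable_fun setT (fun u : R => (\1_(AA k) u : R)%:E).
  change (measurable_fun setT (EFin \o (\1_(AA k) : R -> R))).
  apply/measurable_EFinP; exact: (@measurable_indic _ _ _ setT (AA k) (mltE (gg k))).
have hI : forall u, setT u -> (0 <= (\1_(AA k) u : R)%:E)%E.
  by move=> u _; rewrite lee_fin indicE; case: (_ \in _).
have hk : (0 <= (cc k)%:E)%E by rewrite lee_fin cc_ge0.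
rewrite (ge0_integralZl U measurableT mI hI hk).
by rewrite integral_indic // ?setIT //; exact: mltE.
Qed.

Lemma int_ww_le : (\int[U]_u ww u <= \sum_(k <oo) (cc k)%:E * gg k)%E.
Proof.
rewrite int_ww; apply: lee_nneseries.
  by move=> k _ _; rewrite mule_ge0 // ?lee_fin ?cc_ge0 // measure_ge0.
move=> k _; apply: lee_wpmul2l; first by rewrite lee_fin cc_ge0.
exact: UE_ub (gg_ge0 k).
Qed.

Definition aa k : R := 4 `^ p * (2^+k) `^ (p - 1).

Lemma aa_ge0 k : 0 <= aa k.
Proof. by rewrite mulr_ge0 ?powR_ge0. Qed.

Lemma cc_eq k : cc k / 2^+k = aa k.
Proof.
have p0 : (0:R) < 2^+k by rewrite exprn_gt0.
rewrite /cc /aa (_ : (2:R)^+k.+2 = 4 * 2^+k); last first.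
  by rewrite !exprS mulrA; congr (_ * _); lra.
rewrite powRM ?exprn_ge0 //.
rewrite -mulrA; congr (_ * _).
have -> : (2^+k) `^ p = (2^+k) `^ (p - 1) * (2^+k) `^ 1.
  by rewrite -powRD ?subrK //; apply/implyP => _; rewrite expf_neq0.
by rewrite powRr1 ?mulfK ?gt_eqF // ltW.
Qed.

Lemma ccgg k : ((cc k)%:E * gg k =
  \int[PY]_w ((aa k) * hinge (2^+k) (Y w))%:E)%E.
Proof.
under eq_integral do rewrite EFinM.
rewrite ge0_integralZl //; last 3 first.
- exact: mhY.
- by move=> w _; rewrite lee_fin hinge_ge0.
- by rewrite lee_fin aa_ge0.
by rewrite /gg muleA -EFinM -cc_eq.
Qed.

Lemma ypow (y : R) : 0 <= y -> y * y `^ (p - 1) = y `^ p.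
Proof.
rewrite le_eqVlt => /orP[/eqP <-|y0].
  by rewrite mul0r powR0 // gt_eqF // (lt_trans ltr01 hp).
rewrite -{1}(powRr1 (ltW y0)) -powRD; last by apply/implyP => _; rewrite gt_eqF.
by rewrite addrC subrK.
Qed.

Definition KK : R := 4 `^ p * (2 `^ (p - 1) / (2 `^ (p - 1) - 1)).

Lemma KK_ge0 : 0 <= KK.
Proof.
have q0 : 0 < p - 1 by rewrite subr_gt0.
have r1 : 1 < 2 `^ (p - 1) := powR2_gt1 q0.
have r2 : 0 <= 2 `^ (p - 1) - 1 by rewrite subr_ge0 ltW.
by rewrite mulr_ge0 ?powR_ge0 // divr_ge0 ?powR_ge0.
Qed.

Lemma pt_bound (y : R) : 0 <= y ->
  (\sum_(k <oo) ((aa k) * hinge (2^+k) y)%:E <= (KK * y `^ p)%:E)%E.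
Proof.
move=> y0.
have t0 : forall k, (0 <= ((aa k) * hinge (2^+k) y)%:E)%E.
  by move=> k; rewrite lee_fin mulr_ge0 ?aa_ge0 ?hinge_ge0.
apply: lime_le; first exact: is_cvg_nneseries.
apply: nearW => n; rewrite sumEFin lee_fin big_mkord.
have -> : \sum_(k < n) aa k * hinge (2 ^+ k) y =
    4 `^ p * \sum_(k < n) (2^+k) `^ (p - 1) * hinge (2 ^+ k) y.
  by rewrite mulr_sumr; apply: eq_bigr => k _; rewrite /aa mulrA.
have q0 : 0 < p - 1 by rewrite subr_gt0.
apply: (le_trans (ler_wpM2l (powR_ge0 _ _) (hinge_series q0 y0 n))).
rewrite /KK -mulrA; apply: ler_wpM2l; first exact: powR_ge0.
rewrite powRM // -(ypow y0).
rewrite le_eqVlt; apply/orP; left; apply/eqP; ring.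
Qed.

Lemma maY k : measurable_fun setT (fun w => ((aa k) * hinge (2^+k) (Y w))%:E).
Proof.
change (measurable_fun setT (EFin \o (fun w => aa k * hinge (2^+k) (Y w)))).
apply/measurable_EFinP; apply: measurable_funM; first exact: measurable_cst.
exact: (measurableT_comp (mhinge _) (measurable_funPT Y)).
Qed.

Lemma sum_ccgg_le : (\sum_(k <oo) (cc k)%:E * gg k <=
  KK%:E * \int[PY]_w (`|Y w| `^ p)%:E)%E.
Proof.
rewrite (eq_eseriesr (fun k _ => ccgg k)).
rewrite -integral_nneseries //; last 2 first.
- exact: maY.
- by move=> k w _; rewrite lee_fin mulr_ge0 ?aa_ge0 ?hinge_ge0.
apply: (@le_trans _ _ (\int[PY]_w (KK%:E * (`|Y w| `^ p)%:E))%E).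
  apply: ge0_le_integral => //.
  - by move=> w _; apply: nneseries_ge0 => k _ _; rewrite lee_fin mulr_ge0 ?aa_ge0 ?hinge_ge0.
  - by apply: ge0_emeasurable_sum; [move=> k w _ _; rewrite lee_fin mulr_ge0 ?aa_ge0 ?hinge_ge0|move=> k _; exact: maY].
  - apply: emeasurable_funM; first exact: measurable_cst.
    exact: mpow (measurable_funPT Y).
  - by move=> w _; rewrite -EFinM ger0_norm //; exact: pt_bound.
have h0 : forall w, setT w -> (0 <= (`|Y w| `^ p)%:E)%E.
  by move=> w _; rewrite lee_fin powR_ge0.
have hK : (0 <= KK%:E)%E by rewrite lee_fin KK_ge0.
by rewrite (ge0_integralZl PY measurableT (mpow p (measurable_funPT Y)) h0 hK).
Qed.

Lemma int_ww_fin : (\int[U]_u ww u < +oo)%E.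
Proof.
apply: (le_lt_trans int_ww_le); apply: (le_lt_trans sum_ccgg_le).
apply: lte_mul_pinfty; first by rewrite lee_fin KK_ge0.
  by [].
exact: hmY.
Qed.

Definition Zf (u : R) : R := 2 + (fine (ww u)) `^ p^-1.

Lemma mZf : measurable_fun setT Zf.
Proof.
apply: measurable_funD; first exact: measurable_cst.
apply: (measurableT_comp (measurable_powR _)).
exact: (measurableT_comp (fine_measurable measurableT) mww).
Qed.

Lemma Zf_ge2 u : 2 <= Zf u.
Proof. by rewrite /Zf lerDl powR_ge0. Qed.

Lemma cc_root k : (cc k) `^ p^-1 = 2^+k.+2.
Proof.
rewrite /cc -powRrM mulfV ?powRr1 ?exprn_ge0 //.
by rewrite gt_eqF // (lt_trans ltr01 hp).
Qed.

Lemma term_le_ww k u : ((cc k)%:E * (\1_(AA k) u)%:E <= ww u)%E.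
Proof.
apply: le_trans (nneseries_lim_ge k.+1 (fun n _ _ => term_ge0 n u)).
rewrite big_nat_recr //= leeDr //.
by apply: sume_ge0 => n _; exact: term_ge0.
Qed.

Lemma int_ww_integrable : U.-integrable setT ww.
Proof.
apply/integrableP; split; first exact: mww.
under eq_integral do rewrite gee0_abs ?ww_ge0 //.
exact: int_ww_fin.
Qed.

Lemma moment_Z : finite_pth_moment U p Zf.
Proof.
rewrite /finite_pth_moment.
have p0 : 0 <= p by apply: ltW; exact: lt_trans ltr01 hp.
apply: (@le_lt_trans _ _ (\int[U]_u ((2 `^ p)%:E * ((2 `^ p)%:E + ww u)))%E).
  apply: (ge0_le_integral U measurableT).
  - by move=> u _; rewrite lee_fin powR_ge0.
  - exact: mpow mZf.
  - apply: emeasurable_funM; first exact: measurable_cst.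
    exact: (emeasurable_funD (measurable_cst _) mww).
  - move=> u _; rewrite ger0_norm; last by apply: le_trans (Zf_ge2 u).
    have F0 : 0 <= fine (ww u) by apply: fine_ge0; exact: ww_ge0.
    apply: (@le_trans _ _ ((2 `^ p * (2 `^ p + fine (ww u)))%:E)).
      rewrite lee_fin /Zf.
      have hb : (fine (ww u) `^ p^-1) `^ p = fine (ww u).
        by rewrite -powRrM mulVf ?powRr1 // gt_eqF // (lt_trans ltr01 hp).
      have h2 : (0:R) <= 2 by lra.
      have := @powD_le R p 2 (fine (ww u) `^ p^-1) p0 h2 (powR_ge0 _ _).
      by rewrite hb.
    rewrite EFinM EFinD; apply: lee_wpmul2l; first by rewrite lee_fin powR_ge0.
    rewrite leeD2l; have := ww_ge0 u; case: (ww u) => [r| |] //= _.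
have hc : (0 <= (2 `^ p)%:E)%E by rewrite lee_fin powR_ge0.
have mD : measurable_fun setT (fun u => ((2 `^ p)%:E + ww u)%E).
  exact: (emeasurable_funD (measurable_cst _) mww).
have hD : forall u : R, setT u -> (0 <= (2 `^ p)%:E + ww u)%E.
  by move=> u _; rewrite adde_ge0 ?ww_ge0 // lee_fin powR_ge0.
rewrite (ge0_integralZl U measurableT mD hD hc).
apply: lte_mul_pinfty; [exact: hc|by []|].
have c0 : forall u : R, setT u -> (0 <= (cst (2 `^ p)%:E) u)%E.
  by move=> u _; rewrite lee_fin powR_ge0.
have w0 : forall u : R, setT u -> (0 <= ww u)%E by move=> u _; exact: ww_ge0.
rewrite (ge0_integralD U measurableT c0 (measurable_cst _) w0 mww).
rewrite integral_cst // lte_add_pinfty //; last exact: int_ww_fin.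
apply: lte_mul_pinfty; [exact: hc|by []|].
exact: (le_lt_trans (probability_le1 U measurableT) (ltry 1)).
Qed.


Lemma dyadic (t : R) : 2 <= t -> exists k, 2^+k.+1 <= t /\ t < 2^+k.+2.
Proof.
move=> t2.
have ex : exists n, t < 2^+n.
  exists (Num.Def.archi_bound t).
  apply: (lt_trans (archi_boundP (le_trans _ t2))); first by [].
  by rewrite -natrX ltr_nat ltn_expl.
case: (ex_minnP ex) => n hn hmin.
case: n hn hmin => [|[|k]] hn hmin.
- by move: hn; rewrite expr0 => h; exfalso; move: t2 h; lra.
- by move: hn; rewrite expr1 => h; exfalso; move: t2 h; lra.
- exists k; split => //.
  rewrite leNgt; apply/negP => h.
  by have := hmin _ h; rewrite ltnn.
Qed.

Lemma st_Z d1 (T1 : measurableType d1) (P1 : probability T1 R)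
  (X : {RV P1 >-> R}) (hX0 : forall w, 0 <= X w) (hicx : icx_le P1 PY X Y) :
  st_le P1 U X Zf.
Proof.
move=> t.
have mX := mpre (measurable_funPT X).
have mZ := mpre mZf.
case: (ltP t 2) => ht.
  rewrite (_ : [set w | (t < Zf w)%R] = setT); last first.
    by apply/seteqP; split => // u _ /=; apply: (lt_le_trans ht); exact: Zf_ge2.
  apply: (le_trans (probability_le1 P1 (mX t))).
  by rewrite probability_setT.
have [k [hk1 hk2]] := dyadic ht.
have e2 : (2:R)^+k.+1 = 2 * 2^+k by rewrite exprS.
have h1 : (P1 [set w | (t < X w)%R] <= P1 [set w | (2 * 2^+k < X w)%R])%E.
  apply: le_measure; rewrite ?inE; [exact: mX|exact: mX|].
  by move=> w /= h; apply: le_lt_trans h; rewrite -e2.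
have h2 : (P1 [set w | (2 * 2^+k < X w)%R] <= gg k)%E.
  exact: (markov_hinge hX0 hicx (exprn_gt0 _ _)).
have h3 : (P1 [set w | (2 * 2^+k < X w)%R] <= 1)%E := probability_le1 P1 (mX _).
have h4 := UE_lb (gg_ge0 k) h3 h2.
apply: (le_trans h1); apply: (le_trans h4).
have [N [mN UN0 hN]] := integrable_ae measurableT int_ww_integrable.
have h5 : AA k `<=` [set u | (t < Zf u)%R] `|` N.
  move=> u Au; case: (pselect (N u)) => [|nNu]; [by right|left].
  have fin : ww u \is a fin_num.
    apply: contrapT => nf; apply: nNu; apply: hN => /=; move=> h; apply: nf; exact: h.
  have hc := term_le_ww k u.
  rewrite indicE mem_set //= mulr1n -EFinM mulr1 -(fineK fin) lee_fin in hc.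
  have hp0 : 0 <= p^-1 by rewrite invr_ge0; apply: ltW; exact: lt_trans ltr01 hp.
  have := @ge0_ler_powR R p^-1 hp0 (cc k) (fine (ww u)).
  rewrite cc_root ?nnegrE ?cc_ge0 ?fine_ge0 ?ww_ge0 //.
  move=> /(_ isT isT hc) h /=; rewrite /Zf; apply: (lt_le_trans hk2); move: h; lra.
have hm1 : AA k \in measurable by rewrite inE; exact: mltE.
have hm2 : ([set u | (t < Zf u)%R] `|` N) \in measurable.
  by rewrite inE; exact: measurableU.
apply: (le_trans (le_measure U hm1 hm2 h5)).
have hN0 : uniform_prob (@ltr01 R) N = 0 := UN0.
move: (measureU2 U (mZ t) mN).
rewrite [X in (_ <= _ + X)%E -> _](_ : _ = 0) ?adde0 //.
Qed.

End zcons.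


End Helpers.
Import Helpers.

Theorem mainTheorem3 (R : realType) (p : R) (hp : 1 < p)
  (I : Type) (dT : I -> measure_display) (T : forall i, measurableType (dT i))
  (P : forall i, probability (T i) R) (X : forall i, {RV P i >-> R})
  (hX : forall i w, 0 <= X i w) :
  (exists (dY : measure_display) (TY : measurableType dY)
          (PY : probability TY R) (Y : {RV PY >-> R}),
     (forall w, 0 <= Y w) /\ finite_pth_moment PY p Y /\
     forall i, icx_le (P i) PY (X i) Y)
  <->
  (exists (dZ : measure_display) (TZ : measurableType dZ)
          (PZ : probability TZ R) (Z : {RV PZ >-> R}),
     finite_pth_moment PZ p Z /\
     forall i, st_le (P i) PZ (X i) Z).
Proof.
split.
- move=> [dY [TY [PY [Y [hY0 [hmY hicx]]]]]].
  exists _, _, (uniform_prob (@ltr01 R)).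
  unshelve eexists.
    refine (@mfun_Sub _ _ (measurableTypeR R) _ (Zf p Y) _).
    apply: mem_set => mD B mB; exact: (mZf p Y mD mB).
  split.
  + exact: (moment_Z hp hY0 hmY).
  + by move=> i; exact: (st_Z hp hY0 hmY (hX i) (hicx i)).
- move=> [dZ [TZ [PZ [Z [hmZ hst]]]]].
  have mY : measurable_fun setT (fun w => `|Z w| + 1).
    apply: measurable_funD; last exact: measurable_cst.
    exact: (measurableT_comp (@normr_measurable R setT) (measurable_funPT Z)).
  exists dZ, TZ, PZ, (mfun_Sub (mem_set mY : _ \in mfun)).
  have hY0 : forall w, 0 <= `|Z w| + 1 by move=> w; rewrite addr_ge0.
  split; [|split].
  + exact: hY0.
  + have p0 : 0 <= p by apply: ltW; exact: lt_trans ltr01 hp.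
    have hb : forall w, (`| `|Z w| + 1 |) `^ p <= 2 `^ p * (`|Z w| `^ p + 1).
      move=> w; rewrite ger0_norm ?hY0 //.
      by have := @powD_le R p `|Z w| 1 p0 (normr_ge0 _) ler01; rewrite powR1.
    exact: (@moment_le R _ _ PZ p (2 `^ p) (powR_ge0 _ _) _ Z mY
      (measurable_funPT Z) hmZ hb).
  + move=> i; apply: (st_to_icx (hX i) _ _ (hst i)) => w /=.
    * exact: hY0.
    * by rewrite lerD2r ler_norm.
Qed.
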